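(* Let $k\ge 1$ and $m=k+1$. Consider the instance with jobs $1,\dots,k+1$, all of weight $1$, and machines $1,\dots,m$: each job $j\le k$ has processing time $1$ on machine $1$ and may not be assigned to any other machine; job $k+1$ has processing time $k^2$ on each machine $2,\dots,m$ and may not be assigned to machine $1$. Then every schedule has total completion time at least $k^2+k(k+1)/2>\tfrac32 k^2$, while the optimal value of (CP) on this instance is at most $k^2+k$. Consequently the ratio between the integral optimum and the optimum of (CP) is at least $3/2-O(1/k)$.
   Context: (CP) is the convex program: minimize $z$ subject to $z\ge \tfrac12 c^Tx+\tfrac12 x^TDx$, $z\ge c^Tx$, $\sum_{i}x_{ij}=1$ for all jobs $j$, $x\in[0,1]^{M\times J}$, with $x_{ij}=0$ whenever job $j$ may not be assigned to machine $i$. Here $c^Tx=\sum_i\sum_j w_jp_{ij}x_{ij}$ and $x^TDx=\sum_i\sum_j w_j\big(\sum_{j'\prec_i j}2p_{ij'}x_{ij'}+p_{ij}x_{ij}\big)x_{ij}$, where $\prec_i$ is Smith's order on machine $i$ (non-increasing $w_j/p_{ij}$, ties broken by job index). *)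

(* Defs.v *)
From Stdlib Require Import Reals Lra Arith.
Open Scope R_scope.

Fixpoint sum1 (n : nat) (f : nat -> R) : R :=
  match n with
  | O => 0
  | S n' => sum1 n' f + f (S n')
  end.

Definition smith_prec (w : nat -> R) (p : nat -> nat -> R) (i j' j : nat) : bool :=
  if Rlt_dec (w j / p i j) (w j' / p i j') then true
  else if Req_EM_T (w j / p i j) (w j' / p i j') then Nat.ltb j' j
  else false.

Definition cx (nJ nM : nat) (w : nat -> R) (p : nat -> nat -> R)
  (x : nat -> nat -> R) : R :=
  sum1 nM (fun i => sum1 nJ (fun j => w j * p i j * x i j)).

Definition xDx (nJ nM : nat) (w : nat -> R) (p : nat -> nat -> R)
  (x : nat -> nat -> R) : R :=
  sum1 nM (fun i => sum1 nJ (fun j =>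
    w j * (sum1 nJ (fun j' => if smith_prec w p i j' j
                              then 2 * p i j' * x i j' else 0)
           + p i j * x i j) * x i j)).

Definition cp_feasible (nJ nM : nat) (w : nat -> R) (p : nat -> nat -> R)
  (allowed : nat -> nat -> Prop) (x : nat -> nat -> R) (z : R) : Prop :=
  (forall i j, (1 <= i <= nM)%nat -> (1 <= j <= nJ)%nat -> 0 <= x i j <= 1) /\
  (forall i j, (1 <= i <= nM)%nat -> (1 <= j <= nJ)%nat -> ~ allowed i j -> x i j = 0) /\
  (forall j, (1 <= j <= nJ)%nat -> sum1 nM (fun i => x i j) = 1) /\
  z >= / 2 * cx nJ nM w p x + / 2 * xDx nJ nM w p x /\
  z >= cx nJ nM w p x.

(* A (non-preemptive) schedule: job j runs on machine a j during
   [s j, s j + p (a j) j); jobs on the same machine do not overlap. *)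
Definition valid_schedule (nJ nM : nat) (p : nat -> nat -> R)
  (allowed : nat -> nat -> Prop) (a : nat -> nat) (s : nat -> R) : Prop :=
  (forall j, (1 <= j <= nJ)%nat -> (1 <= a j <= nM)%nat /\ allowed (a j) j /\ 0 <= s j) /\
  (forall j j', (1 <= j <= nJ)%nat -> (1 <= j' <= nJ)%nat -> j <> j' -> a j = a j' ->
     s j + p (a j) j <= s j' \/ s j' + p (a j') j' <= s j).

Definition twct (nJ : nat) (w : nat -> R) (p : nat -> nat -> R)
  (a : nat -> nat) (s : nat -> R) : R :=
  sum1 nJ (fun j => w j * (s j + p (a j) j)).

Definition inst_w (k : nat) (j : nat) : R := 1.
(* p i j = 1 for j <= k (meaningful on machine 1 only), k^2 for job k+1
   (meaningful on machines 2..m only); values on forbidden pairs are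
   irrelevant since such pairs can never be used. *)
Definition inst_p (k : nat) (i j : nat) : R :=
  if Nat.leb j k then 1 else INR k ^ 2.
Definition inst_allowed (k : nat) (i j : nat) : Prop :=
  ((1 <= j <= k)%nat /\ i = 1%nat) \/ (j = S k /\ (2 <= i <= S k)%nat).

(* Main.v *)
Require Import Defs.
From Stdlib Require Import Reals Lra Lia Arith List.
Open Scope R_scope.

Lemma sum1_ext n f g : (forall i, (1<=i<=n)%nat -> f i = g i) -> sum1 n f = sum1 n g.
Proof.
  induction n; intros H; cbn [sum1]; auto.
  rewrite IHn by (intros; apply H; lia). rewrite H by lia. reflexivity.
Qed.

Lemma sum1_const n c : sum1 n (fun _ => c) = INR n * c.
Proof. induction n; cbn [sum1]; [simpl; ring|]. rewrite IHn, S_INR; ring. Qed.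

Lemma sum1_zero n f : (forall i, (1<=i<=n)%nat -> f i = 0) -> sum1 n f = 0.
Proof. intros H. rewrite (sum1_ext n f (fun _ => 0)) by auto. rewrite sum1_const; ring. Qed.

Lemma sum1_shift n f : sum1 (S n) f = f 1%nat + sum1 n (fun i => f (S i)).
Proof.
  induction n; cbn [sum1]. ring.
  change (sum1 (S n) f + f (S (S n)) = f 1%nat + (sum1 n (fun i => f (S i)) + f (S (S n)))).
  rewrite IHn; ring.
Qed.

Lemma sum_lt n j c : sum1 n (fun j' => if Nat.ltb j' j then c else 0) = INR (Nat.min n (j-1)) * c.
Proof.
  induction n; cbn [sum1]. simpl; ring.
  rewrite IHn. destruct (Nat.ltb_spec (S n) j).
  - rewrite (Nat.min_l (S n)) by lia. rewrite Nat.min_l by lia. rewrite S_INR; ring.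
  - rewrite !Nat.min_r by lia; ring.
Qed.

Lemma sum_odd n : sum1 n (fun j => 2 * INR (j - 1) + 1) = INR n ^ 2.
Proof.
  induction n; cbn [sum1]. simpl; ring.
  rewrite IHn. replace (S n - 1)%nat with n by lia. rewrite S_INR; ring.
Qed.

Definition sumL (s : nat -> R) (l : list nat) : R := fold_right (fun j acc => s j + acc) 0 l.

Lemma sumL_app s l1 l2 : sumL s (l1 ++ l2) = sumL s l1 + sumL s l2.
Proof. induction l1; simpl. ring. rewrite IHl1; ring. Qed.

Lemma sum1_sumL n f : sum1 n f = sumL f (seq 1 n).
Proof.
  induction n. reflexivity.
  rewrite seq_S, sumL_app. cbn [sum1]. rewrite IHn. simpl. replace (1 + n)%nat with (S n) by lia. ring.
Qed.

Lemma max_exists (s : nat -> R) l : l <> nil -> exists m, In m l /\ forall j, In j l -> s j <= s m.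
Proof.
  induction l as [|a l IH]; intros H; [congruence|].
  destruct l as [|b l'].
  - exists a; split; [left; auto|]. intros j [->|[]]; lra.
  - destruct IH as [m [Hm Hmax]]; [discriminate|].
    destruct (Rle_dec (s a) (s m)).
    + exists m; split; [right; auto|]. intros j [<-|Hj]; auto.
    + exists a; split; [left; auto|]. intros j [<-|Hj]; [lra|]. specialize (Hmax j Hj); lra.
Qed.

Lemma unit_sched (s : nat -> R) : forall n l, length l = n -> NoDup l ->
  (forall j, In j l -> 0 <= s j) ->
  (forall j j', In j l -> In j' l -> j <> j' -> s j + 1 <= s j' \/ s j' + 1 <= s j) ->
  sumL s l >= INR n * (INR n - 1) / 2 /\ (l <> nil -> exists j, In j l /\ s j >= INR n - 1).
Proof.
  induction n; intros l Hlen Hnd Hpos Hdis.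
  - destruct l; [|discriminate]. split; [simpl; lra|congruence].
  - destruct (max_exists s l) as [m [Hm Hmax]]. { destruct l; [discriminate|congruence]. }
    destruct (in_split m l Hm) as [l1 [l2 ->]].
    assert (Hnd' : NoDup (l1 ++ l2)) by (eapply NoDup_remove_1; eauto).
    assert (Hnin : ~ In m (l1 ++ l2)) by (eapply NoDup_remove_2; eauto).
    assert (Hin : forall j, In j (l1 ++ l2) -> In j (l1 ++ m :: l2)).
    { intros j Hj. apply in_app_or in Hj. apply in_or_app. simpl. tauto. }
    assert (Hlen' : length (l1 ++ l2) = n).
    { rewrite length_app in *. simpl in Hlen. lia. }
    destruct (IHn (l1 ++ l2) Hlen' Hnd') as [Hs He].
    { intros j Hj; apply Hpos, Hin, Hj. }
    { intros j j' Hj Hj' Hne; apply Hdis; auto. }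
    assert (Hsm : s m >= INR n).
    { destruct n as [|n'].
      - simpl. apply Rle_ge, Hpos; auto.
      - destruct He as [j0 [Hj0 Hs0]].
        { intro E; rewrite E in Hlen'; discriminate. }
        assert (j0 <> m) by (intro; subst; tauto).
        destruct (Hdis j0 m (Hin _ Hj0) Hm H) as [h|h]; [rewrite S_INR in *; lra|].
        specialize (Hmax j0 (Hin _ Hj0)). lra. }
    assert (sumL s (l1 ++ m :: l2) = sumL s (l1 ++ l2) + s m).
    { rewrite !sumL_app. simpl. ring. }
    rewrite S_INR. split.
    + rewrite H. nra.
    + intros _. exists m; split; auto. lra.
Qed.

Lemma sum1_add n f g : sum1 n (fun i => f i + g i) = sum1 n f + sum1 n g.
Proof. induction n; cbn [sum1]. ring. rewrite IHn; ring. Qed.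

Lemma p_small k i j : (j <= k)%nat -> inst_p k i j = 1.
Proof. intros. unfold inst_p. destruct (Nat.leb_spec j k); [reflexivity|lia]. Qed.

Lemma p_big k i : inst_p k i (S k) = INR k ^ 2.
Proof. unfold inst_p. destruct (Nat.leb_spec (S k) k); [lia|reflexivity]. Qed.

Lemma part1 k : (1 <= k)%nat -> forall (a : nat -> nat) (s : nat -> R),
  valid_schedule (S k) (S k) (inst_p k) (inst_allowed k) a s ->
  twct (S k) (inst_w k) (inst_p k) a s >= INR k ^ 2 + INR k * (INR k + 1) / 2.
Proof.
  intros Hk a s [Hv Hd]. unfold twct, inst_w. cbn [sum1].
  rewrite (sum1_ext k _ (fun j => s j + 1)) by (intros; rewrite p_small by lia; ring).
  rewrite p_big, sum1_add, sum1_const, sum1_sumL.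
  assert (Ha : forall j, (1 <= j <= k)%nat -> a j = 1%nat).
  { intros j Hj. destruct (Hv j ltac:(lia)) as [_ [[[_ H]|[H _]] _]]; [auto|lia]. }
  destruct (unit_sched s k (seq 1 k) (length_seq _ _) (seq_NoDup _ _)) as [H _].
  - intros j Hj. apply in_seq in Hj. apply Hv; lia.
  - intros j j' Hj Hj' Hne. apply in_seq in Hj. apply in_seq in Hj'.
    destruct (Hd j j' ltac:(lia) ltac:(lia) Hne) as [h|h].
    + rewrite !Ha by lia. reflexivity.
    + rewrite p_small in h by lia. auto.
    + rewrite p_small in h by lia. auto.
  - destruct (Hv (S k) ltac:(lia)) as [_ [_ H0]]. nra.
Qed.

Definition xk (k : nat) (i j : nat) : R :=
  if Nat.leb j k then (if Nat.eqb i 1 then 1 else 0)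
  else (if Nat.eqb i 1 then 0 else / INR k).

Lemma if0 (b : bool) (c : R) : (if b then c * 0 else 0) = 0.
Proof. destruct b; ring. Qed.

Lemma part3 k : (1 <= k)%nat ->
  cp_feasible (S k) (S k) (inst_w k) (inst_p k) (inst_allowed k) (xk k) (INR k ^ 2 + INR k).
Proof.
  intros Hk.
  assert (Hkpos : 1 <= INR k) by (apply (le_INR 1); lia).
  assert (Hx1 : forall j, (1 <= j <= k)%nat -> xk k 1 j = 1).
  { intros j Hj. unfold xk. destruct (Nat.leb_spec j k); [reflexivity|lia]. }
  assert (Hx0 : forall i j, (1 <= j <= k)%nat -> (2 <= i)%nat -> xk k i j = 0).
  { intros i j Hj Hi. unfold xk. destruct (Nat.leb_spec j k); [|lia].
    destruct (Nat.eqb_spec i 1); [lia|reflexivity]. }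
  assert (Hy1 : xk k 1 (S k) = 0).
  { unfold xk. destruct (Nat.leb_spec (S k) k); [lia|reflexivity]. }
  assert (Hy : forall i, (2 <= i)%nat -> xk k i (S k) = / INR k).
  { intros i Hi. unfold xk. destruct (Nat.leb_spec (S k) k); [lia|].
    destruct (Nat.eqb_spec i 1); [lia|reflexivity]. }
  assert (Hcx : cx (S k) (S k) (inst_w k) (inst_p k) (xk k) = INR k ^ 2 + INR k).
  { unfold cx, inst_w. rewrite sum1_shift. cbn [sum1].
    rewrite Hy1, (sum1_ext k _ (fun _ => 1)) by (intros; rewrite Hx1, p_small by lia; ring).
    rewrite sum1_const.
    rewrite (sum1_ext k _ (fun _ => INR k)).
    2:{ intros i Hi. cbn [sum1]. rewrite Hy, p_big by lia.
        rewrite sum1_zero by (intros; rewrite Hx0 by lia; ring). field. lra. }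
    rewrite !sum1_const. ring. }
  assert (HxD : xDx (S k) (S k) (inst_w k) (inst_p k) (xk k) = INR k ^ 2 + INR k).
  { unfold xDx, inst_w. rewrite sum1_shift. cbn [sum1].
    rewrite Hy1, (Rmult_0_r (1 * (_ + _ + _))), Rplus_0_r.
    rewrite (sum1_ext k _ (fun j => 2 * INR (j - 1) + 1)).
    2:{ intros j Hj. rewrite (Hx1 j Hj), (p_small k 1 j) by lia.
        rewrite if0, Rplus_0_r.
        rewrite (sum1_ext k _ (fun j' => if Nat.ltb j' j then 2 else 0)).
        2:{ intros j' Hj'. rewrite Hx1, p_small by lia.
            unfold smith_prec, inst_w. rewrite !p_small by lia.
            destruct (Rlt_dec _ _) as [h|_]; [lra|].
            destruct (Req_EM_T _ _) as [_|h]; [|lra].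
            destruct (Nat.ltb j' j); ring. }
        rewrite sum_lt, Nat.min_r by lia. ring. }
    rewrite sum_odd.
    rewrite (sum1_ext k _ (fun _ => 1)).
    2:{ intros i Hi. cbn [sum1]. rewrite Hy by lia.
        rewrite sum1_zero by (intros; rewrite Hx0 by lia; ring).
        rewrite sum1_zero.
        2:{ intros j' Hj'. rewrite Hx0 by lia. apply if0. }
        unfold smith_prec. destruct (Rlt_dec _ _) as [h|_]; [lra|].
        destruct (Req_EM_T _ _) as [_|h]; [|lra]. rewrite Nat.ltb_irrefl, p_big.
        field. lra. }
    rewrite sum1_const. ring. }
  split; [|split; [|split; [|split]]].
  - intros i j Hi Hj. destruct (Nat.eq_dec i 1) as [->|Hi1].
    + destruct (Nat.eq_dec j (S k)) as [->|]. rewrite Hy1; lra. rewrite Hx1 by lia; lra.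
    + destruct (Nat.eq_dec j (S k)) as [->|]. rewrite Hy by lia.
      split. left; apply Rinv_0_lt_compat; lra. rewrite <- Rinv_1. apply Rinv_le_contravar; lra.
      rewrite Hx0 by lia; lra.
  - intros i j Hi Hj Hna. unfold inst_allowed in Hna.
    destruct (Nat.eq_dec i 1) as [->|Hi1].
    + destruct (Nat.eq_dec j (S k)) as [->|]; [exact Hy1|]. exfalso; apply Hna; left; lia.
    + destruct (Nat.eq_dec j (S k)) as [->|]; [exfalso; apply Hna; right; lia|]. apply Hx0; lia.
  - intros j Hj. rewrite sum1_shift. destruct (Nat.eq_dec j (S k)) as [->|].
    + rewrite Hy1, (sum1_ext k _ (fun _ => / INR k)) by (intros; apply Hy; lia).
      rewrite sum1_const. field. lra.
    + rewrite Hx1, sum1_zero by (intros; try apply Hx0; lia). ring.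
  - rewrite Hcx, HxD. lra.
  - rewrite Hcx. lra.
Qed.

Theorem mainTheorem4 :
  exists c : R, forall k : nat, (1 <= k)%nat ->
    let nJ := S k in let nM := S k in
    (forall (a : nat -> nat) (s : nat -> R),
        valid_schedule nJ nM (inst_p k) (inst_allowed k) a s ->
        twct nJ (inst_w k) (inst_p k) a s >= INR k ^ 2 + INR k * (INR k + 1) / 2) /\
    INR k ^ 2 + INR k * (INR k + 1) / 2 > 3 / 2 * INR k ^ 2 /\
    (exists (x : nat -> nat -> R) (z : R),
        cp_feasible nJ nM (inst_w k) (inst_p k) (inst_allowed k) x z /\
        z <= INR k ^ 2 + INR k) /\
    (forall (a : nat -> nat) (s : nat -> R),
        valid_schedule nJ nM (inst_p k) (inst_allowed k) a s ->
        exists (x : nat -> nat -> R) (z : R),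
          cp_feasible nJ nM (inst_w k) (inst_p k) (inst_allowed k) x z /\
          twct nJ (inst_w k) (inst_p k) a s >= (3 / 2 - c / INR k) * z).
Proof.
  exists 1. intros k Hk nJ nM. subst nJ nM.
  assert (Hkpos : 1 <= INR k) by (apply (le_INR 1); lia).
  split; [|split; [|split]].
  - apply part1; auto.
  - nra.
  - exists (xk k), (INR k ^ 2 + INR k). split; [apply part3; auto|lra].
  - intros a s Hv. exists (xk k), (INR k ^ 2 + INR k). split; [apply part3; auto|].
    pose proof (part1 k Hk a s Hv).
    assert ((3 / 2 - 1 / INR k) * (INR k ^ 2 + INR k) = 3/2 * INR k ^ 2 + INR k / 2 - 1)
      by (field; lra).
    rewrite H0. nra.
Qed.
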